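(* Let $\mathcal{S}=\{S_t\}_{t=1}^T$ be a temporal feedback graph with $K\ge 2$ actions, let $C_1,\dots,C_N$ be its maximal orders, and let $\mathsf{UB}(\mathcal{S})$ be the optimal value of the upper bound program. If Algorithm 1 (described in the context) is run with an optimal solution $\boldsymbol\lambda^*$ of the upper bound program, then its worst-case regret is at most $O(\mathsf{UB}(\mathcal{S})\sqrt{\log K})$.
   Context: Setting: $T$ rounds, action set $\Delta_K$ (probability distributions over $[K]$), loss vectors $\ell_t\in[0,1]^K$. A temporal feedback graph $\mathcal{S}$ is a collection of subsets $S_t\subseteq[T]\setminus\{t\}$, $t\in[T]$; $S_t$ is the set of rounds whose losses are visible at round $t$. An $\mathcal{S}$-learning algorithm is a collection of functions $A_t$ mapping the losses $(\ell_s)_{s\in S_t}$ to an action $x_t\in\Delta_K$. Its regret on a loss sequence $\boldsymbol\ell=(\ell_1,\dots,\ell_T)$ is $\mathrm{Reg}(\mathcal{A},\boldsymbol\ell)=\sum_{t=1}^T\langle x_t,\ell_t\rangle-\min_{x^*\in\Delta_K}\sum_{t=1}^T\langle x^*,\ell_t\rangle$, and its worst-case regret is $\mathrm{Reg}(\mathcal{A})=\max_{\boldsymbol\ell\in([0,1]^K)^T}\mathrm{Reg}(\mathcal{A},\boldsymbol\ell)$. A sequence of rounds $t_1,\dots,t_w$ is an order if $t_u\in S_{t_v}$ for all $u<v$; it is maximal if no super-sequence of it is an order. Let $C_1,\dots,C_N$ be all maximal orders. The upper bound program is: minimize $\sum_{c=1}^N\sqrt{\sum_{t\in C_c}\lambda_{c,t}^2}$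 subject to $\sum_{c=1}^N\lambda_{c,t}=1$ for all $t\in[T]$, $\lambda_{c,t}=0$ if $t\notin C_c$, and $\lambda_{c,t}\ge 0$; $\mathsf{UB}(\mathcal{S})$ denotes its optimal value. Algorithm 1 (input: a feasible $\boldsymbol\lambda$ for the upper bound program): for each $c$ set $\eta_c=\sqrt{(\log K)/\sum_{t\in C_c}\lambda_{c,t}^2}$. At round $t$, for each order $C_c$ containing $t$, let $t_1,\dots,t_w=t$ be the prefix of $C_c$ up to and including $t$ and define $x^{(c)}_t\in\Delta_K$ by $x^{(c)}_{t,i}=\exp(-\eta_c\sum_{u=1}^{w-1}\lambda_{c,t_u}\ell_{t_u,i})/\sum_{j=1}^K\exp(-\eta_c\sum_{u=1}^{w-1}\lambda_{c,t_u}\ell_{t_u,j})$; play $x_t=\sum_{c:\,t\in C_c}\lambda_{c,t}x^{(c)}_t$. *)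

(* Defs.v *)
From HB Require Import structures.
From mathcomp Require Import all_boot all_order all_algebra.
From mathcomp Require Import all_classical all_reals all_analysis.
Set Implicit Arguments. Unset Strict Implicit. Unset Printing Implicit Defensive.
Import Order.TTheory GRing.Theory Num.Theory.
Local Open Scope ring_scope.

(* Rounds are 'I_T (paper's round t+1 is t : 'I_T); actions are 'I_K.
   A temporal feedback graph is S : 'I_T -> {set 'I_T} with t \notin S t. *)
Definition temporal_feedback_graph (T : nat) (S : 'I_T -> {set 'I_T}) : Prop :=
  forall t : 'I_T, t \notin S t.

Definition is_order (T : nat) (S : 'I_T -> {set 'I_T}) (s : seq 'I_T) : Prop :=
  pairwise (fun a b => a \in S b) s.

Definition is_maximal_order (T : nat) (S : 'I_T -> {set 'I_T}) (s : seq 'I_T) : Prop :=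
  is_order S s /\ (forall s' : seq 'I_T, subseq s s' -> is_order S s' -> s' = s).

Definition enumerates_maximal_orders (T N : nat) (S : 'I_T -> {set 'I_T})
    (C : 'I_N -> seq 'I_T) : Prop :=
  injective C /\ (forall s, is_maximal_order S s <-> exists c, C c = s).

Section Program.
Variables (R : realType) (T N : nat) (C : 'I_N -> seq 'I_T).

Definition ub_feasible (lam : 'I_N -> 'I_T -> R) : Prop :=
  [/\ forall t, \sum_(c < N) lam c t = 1,
      forall c t, t \notin C c -> lam c t = 0
    & forall c t, 0 <= lam c t].

Definition ub_objective (lam : 'I_N -> 'I_T -> R) : R :=
  \sum_(c < N) Num.sqrt (\sum_(t | t \in C c) lam c t ^+ 2).

Definition UB : R := inf [set ub_objective lam | lam in ub_feasible].

Definition ub_optimal (lam : 'I_N -> 'I_T -> R) : Prop :=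
  ub_feasible lam /\ forall lam', ub_feasible lam' -> ub_objective lam <= ub_objective lam'.

End Program.

Section Algo.
Variables (R : realType) (T N K : nat) (C : 'I_N -> seq 'I_T)
  (lam : 'I_N -> 'I_T -> R).

Definition eta (c : 'I_N) : R :=
  Num.sqrt (ln (K%:R : R) / \sum_(t | t \in C c) lam c t ^+ 2).

Definition prefix_before (c : 'I_N) (t : 'I_T) : seq 'I_T :=
  take (index t (C c)) (C c).

Definition weight (loss : 'I_T -> 'I_K -> R) (c : 'I_N) (t : 'I_T) (i : 'I_K) : R :=
  expR (- eta c * \sum_(u <- prefix_before c t) lam c u * loss u i).

Definition expert_action (loss : 'I_T -> 'I_K -> R) (c : 'I_N) (t : 'I_T) (i : 'I_K) : R :=
  weight loss c t i / \sum_(j < K) weight loss c t j.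

Definition alg1_action (loss : 'I_T -> 'I_K -> R) (t : 'I_T) (i : 'I_K) : R :=
  \sum_(c < N | t \in C c) lam c t * expert_action loss c t i.

End Algo.

Definition in_simplex (R : realType) (K : nat) (x : 'I_K -> R) : Prop :=
  (forall i, 0 <= x i) /\ \sum_(i < K) x i = 1.

Definition loss_seq (R : realType) (T K : nat) (loss : 'I_T -> 'I_K -> R) : Prop :=
  forall t i, 0 <= loss t i <= 1.

Definition regret_against (R : realType) (T K : nat) (x : 'I_T -> 'I_K -> R)
    (loss : 'I_T -> 'I_K -> R) (xstar : 'I_K -> R) : R :=
  \sum_(t < T) \sum_(i < K) x t i * loss t i
  - \sum_(t < T) \sum_(i < K) xstar i * loss t i.

(* Main.v *)
From HB Require Import structures.
From mathcomp Require Import all_boot all_order all_algebra.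
From mathcomp Require Import all_classical all_reals all_analysis.
From mathcomp Require Import ring lra.
Require Import Defs.
Import Order.TTheory GRing.Theory Num.Theory.
Local Open Scope ring_scope.

Lemma expN_le (R : realType) (y : R) : 0 <= y -> expR (- y) <= 1 - y + y ^+ 2.
Proof.
move=> y0.
have hE := expR_ge1Dx y.
have hM := expRxMexpNx_1 y.
have he : 0 <= expR (- y) := expR_ge0 _.
set e := expR (- y) in hM he *; set E := expR y in hE hM *.
have q0 : 0 <= 1 - y + y ^+ 2 by nra.
have h1 : e * ((E - (1 + y)) * (1 - y + y ^+ 2)) >= 0.
  by apply: mulr_ge0 => //; apply: mulr_ge0 => //; lra.
have h2 : y ^+ 3 * e >= 0 by apply: mulr_ge0 => //; apply: exprn_ge0.
have : e * (E * (1 - y + y ^+ 2)) = 1 - y + y ^+ 2 by rewrite mulrA [e * E]mulrC hM mul1r.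
move: h1 h2; rewrite !expr2 exprS expr2.
nra.
Qed.

Arguments expN_le {R}.

Lemma exists_min (R : realType) (K : nat) (F : 'I_K -> R) :
  (0 < K)%N -> exists i0, forall i, F i0 <= F i.
Proof.
move=> K0; have i1 : 'I_K := Ordinal K0.
have [i0 _ Hi0] := @arg_minP _ R _ i1 predT F isT.
by exists i0 => i; apply: Hi0.
Qed.

Section EW.
Variables (R : realType) (K : nat) (g : nat -> 'I_K -> R) (b : nat -> R) (et : R).
Hypothesis K0 : (0 < K)%N.
Hypothesis et0 : 0 <= et.
Hypothesis gb : forall k i, 0 <= g k i <= b k.

Definition Lc k i := \sum_(j < k) g j i.
Definition Wt k := \sum_(i < K) expR (- et * Lc k i).
Definition xw k i := expR (- et * Lc k i) / Wt k.
Definition ak k := - et * (\sum_(i < K) xw k i * g k i) + et ^+ 2 * b k ^+ 2.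

Lemma Wt_gt0 k : 0 < Wt k.
Proof.
rewrite /Wt (bigD1 (Ordinal K0)) //=.
by apply: ltr_pwDl; [apply: expR_gt0 | apply: sumr_ge0 => i _; apply: expR_ge0].
Qed.

Lemma step k : Wt k.+1 <= Wt k * expR (ak k).
Proof.
have W0 := Wt_gt0 k.
apply: (@le_trans _ _ (Wt k * (1 + ak k))); last first.
  by rewrite ler_pM2l // expR_ge1Dx.
apply: (@le_trans _ _ (\sum_(i < K) expR (- et * Lc k i) * (1 - et * g k i + et ^+ 2 * b k ^+ 2))).
  rewrite /Wt; apply: ler_sum => i _.
  have -> : - et * Lc k.+1 i = - et * Lc k i + - (et * g k i).
    by rewrite /Lc big_ord_recr /=; ring.
  rewrite expRD; apply: ler_wpM2l; first exact: expR_ge0.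
  have [g0 g1] := andP (gb k i).
  have h := expN_le _ (mulr_ge0 et0 g0).
  apply: (le_trans h).
  rewrite lerD2l exprMn; apply: ler_wpM2l; first exact: exprn_ge0.
  by rewrite ler_sqr ?nnegrE //; apply: le_trans g1.
rewrite /ak mulrDr mulr1 mulrDr.
under eq_bigr => i _ do rewrite !mulrDr mulr1.
rewrite !big_split /= -/(Wt k) -addrA lerD2l.
rewrite le_eqVlt; apply/orP; left; apply/eqP; congr (_ + _); last by rewrite -mulr_suml.
rewrite mulrCA big_distrr /= big_distrr /=; apply: eq_bigr => i _.
have Wn0 : Wt k != 0 by rewrite gt_eqF.
rewrite /xw; field; exact: Wn0.
Qed.

Lemma Wn n : Wt n <= K%:R * expR (\sum_(k < n) ak k).
Proof.
elim: n => [|n IH].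
  rewrite big_ord0 expR0 mulr1 /Wt /Lc.
  under eq_bigr => i _ do rewrite big_ord0 mulr0 expR0.
  by rewrite sumr_const card_ord.
apply: (le_trans (step n)).
rewrite big_ord_recr /= (expRD (\sum_(i < n) ak i)) mulrA.
by apply: ler_wpM2r => //; apply: expR_ge0.
Qed.

Lemma ew_bound n (xs : 'I_K -> R) :
  (forall i, 0 <= xs i) -> \sum_(i < K) xs i = 1 ->
  et * (\sum_(k < n) \sum_(i < K) xw k i * g k i - \sum_(i < K) xs i * Lc n i)
  <= ln K%:R + et ^+ 2 * \sum_(k < n) b k ^+ 2.
Proof.
move=> xs0 xs1.
have [i0 Hi0] := @exists_min R K (Lc n) K0.
have h1 : Lc n i0 <= \sum_(i < K) xs i * Lc n i.
  rewrite -[leLHS]mul1r -xs1 mulr_suml; apply: ler_sum => i _.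
  by apply: ler_wpM2l.
have h2 : expR (- et * \sum_(i < K) xs i * Lc n i) <= Wt n.
  apply: (@le_trans _ _ (expR (- et * Lc n i0))).
    by rewrite ler_expR !mulNr lerN2; apply: ler_wpM2l.
  rewrite /Wt (bigD1 i0) //= lerDl; apply: sumr_ge0 => i _; apply: expR_ge0.
have h3 := le_trans h2 (Wn n).
have Kp : 0 < K%:R :> R by rewrite ltr0n.
have h4 : - et * \sum_(i < K) xs i * Lc n i <= ln K%:R + \sum_(k < n) ak k.
  rewrite -[leLHS]expRK -[\sum_(k < n) ak k]expRK -lnM ?posrE ?expR_gt0 //.
  by rewrite ler_ln ?posrE ?mulr_gt0 ?expR_gt0 // expRK.
move: h4; rewrite /ak big_split /= -mulr_sumr -mulr_sumr !mulNr => h4.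
rewrite mulrBr; lra.
Qed.

End EW.
Arguments Lc {R K}.
Arguments Wt {R K}.
Arguments xw {R K}.
Arguments ew_bound {R K g b et}.

Lemma sum_take (R : realType) (T : nat) (s : seq 'I_T) (x0 : 'I_T) (f : 'I_T -> R) k :
  (k <= size s)%N -> \sum_(u <- take k s) f u = \sum_(j < k) f (nth x0 s j).
Proof.
move=> ks; rewrite (big_nth x0) size_takel // big_mkord.
by apply: eq_bigr => j _; rewrite nth_take.
Qed.

Lemma sum_in_uniq (R : realType) (T : nat) (s : seq 'I_T) (x0 : 'I_T) (f : 'I_T -> R) :
  uniq s -> \sum_(t | t \in s) f t = \sum_(k < size s) f (nth x0 s k).
Proof.
by move=> us; rewrite -(big_uniq _ us) (big_nth x0) big_mkord.
Qed.

Arguments sum_in_uniq {R T s}.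
Arguments sum_take {R T s}.

Lemma chain_bound (R : realType) (T N K : nat) (C : 'I_N -> seq 'I_T)
  (lam : 'I_N -> 'I_T -> R) (loss : 'I_T -> 'I_K -> R) (xs : 'I_K -> R) (c : 'I_N) :
  (2 <= K)%N -> uniq (C c) -> (forall t, t \notin C c -> lam c t = 0) ->
  (forall t, 0 <= lam c t) -> loss_seq loss -> in_simplex xs ->
  \sum_(t < T) lam c t * (\sum_(i < K) expert_action C lam loss c t i * loss t i
                          - \sum_(i < K) xs i * loss t i)
  <= 2 * Num.sqrt (ln (K%:R : R)) * Num.sqrt (\sum_(t | t \in C c) lam c t ^+ 2).
Proof.
move=> K2 us lam0 lamp Hl [xs0 xs1].
have K0 : (0 < K)%N by apply: leq_trans K2.
have lnK0 : 0 < ln (K%:R : R) by apply: ln_gt0; rewrite ltr1n.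
have rhs0 : 0 <= 2 * Num.sqrt (ln (K%:R : R)) * Num.sqrt (\sum_(t | t \in C c) lam c t ^+ 2).
  by rewrite !mulr_ge0 ?sqrtr_ge0.
rewrite (bigID (fun t => t \in C c)) /= [X in _ + X]big1 ?addr0; last first.
  by move=> t /lam0 ->; rewrite mul0r.
set Lam := \sum_(t | t \in C c) lam c t ^+ 2.
have Lam0 : 0 <= Lam by apply: sumr_ge0 => t _; apply: sqr_ge0.
have [LamE|Lampos] := eqVneq Lam 0.
  rewrite big1 // => t tC.
  have := psumr_eq0P (fun t _ => sqr_ge0 (lam c t)) LamE tC.
  by move/eqP; rewrite sqrf_eq0 => /eqP ->; rewrite mul0r.
have LamP : 0 < Lam by rewrite lt_def Lampos.
case: (pickP (@predT 'I_T)) => [x0 _|T0]; last first.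
  by move: Lampos; rewrite /Lam big1 ?eqxx // => t; have := T0 t.
set s := C c in us lam0 Lam LamP Lampos Lam0 *.
set g := fun k (i : 'I_K) => lam c (nth x0 s k) * loss (nth x0 s k) i.
set b := fun k => lam c (nth x0 s k).
set et := eta K C lam c.
have gb : forall k i, 0 <= g k i <= b k.
  move=> k i; rewrite /g /b; have /andP [l0 l1] := Hl (nth x0 s k) i.
  by rewrite mulr_ge0 //= ler_piMr.
have et0 : 0 <= et by apply: sqrtr_ge0.
have LamB : Lam = \sum_(k < size s) b k ^+ 2 := sum_in_uniq x0 (fun t => lam c t ^+ 2) us.
have key := ew_bound K0 et0 gb (size s) xs xs0 xs1.
rewrite (sum_in_uniq x0) //.
have -> : \sum_(k < size s) lam c (nth x0 s k) *
    (\sum_(i < K) expert_action C lam loss c (nth x0 s k) i * loss (nth x0 s k) i -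
     \sum_(i < K) xs i * loss (nth x0 s k) i)
  = \sum_(k < size s) \sum_(i < K) xw g et k i * g k i - \sum_(i < K) xs i * Lc g (size s) i.
  rewrite /Lc.
  under [X in _ = _ - X]eq_bigr => i _ do rewrite big_distrr /=.
  rewrite [X in _ = _ - X]exchange_big /= -sumrB; apply: eq_bigr => k _.
  rewrite mulrBr big_distrr /= big_distrr /=; congr (_ - _); apply: eq_bigr => i _; last first.
    by rewrite /g; ring.
  have hk : (k < size s)%N := ltn_ord k.
  have -> : expert_action C lam loss c (nth x0 s k) i = xw g et k i.
    rewrite /expert_action /xw /Wt /weight /prefix_before -/s index_uniq //.
    have hL : forall j, \sum_(u <- take k s) lam c u * loss u j = Lc g k j.
      by move=> j; rewrite (sum_take x0 _ _ (ltnW hk)).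
    rewrite {1}hL.
    by under [X in _ / X = _]eq_bigr => j _ do rewrite hL.
  by rewrite /g mulrCA.
have etE : et = Num.sqrt (ln (K%:R : R) / Lam) by [].
have etP : 0 < et by rewrite etE sqrtr_gt0 divr_gt0.
have et2 : et ^+ 2 = ln (K%:R : R) / Lam by rewrite etE sqr_sqrtr // ltW // divr_gt0.
have etS : et * Num.sqrt Lam = Num.sqrt (ln (K%:R : R)).
  by rewrite etE -sqrtrM ?divr_ge0 ?ltW // divfK.
rewrite -LamB et2 divfK // in key.
rewrite -(ler_pM2l etP).
apply: (le_trans key).
have -> : et * (2 * Num.sqrt (ln (K%:R : R)) * Num.sqrt Lam)
  = 2 * Num.sqrt (ln (K%:R : R)) * (et * Num.sqrt Lam) by ring.
rewrite etS -mulrA -expr2 (sqr_sqrtr (ltW lnK0)).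
lra.
Qed.

Theorem theorem1 :
  exists c : nat, forall (R : realType) (T N K : nat) (S : 'I_T -> {set 'I_T})
    (C : 'I_N -> seq 'I_T) (lam : 'I_N -> 'I_T -> R),
    (2 <= K)%N ->
    temporal_feedback_graph S ->
    enumerates_maximal_orders S C ->
    ub_optimal C lam ->
    forall (loss : 'I_T -> 'I_K -> R) (xstar : 'I_K -> R),
      loss_seq loss -> in_simplex xstar ->
      regret_against (alg1_action C lam loss) loss xstar
        <= c%:R * UB R C * Num.sqrt (ln (K%:R : R)).
Proof.
exists 2%N => R T N K S C lam K2 Hfg [Cinj Cenum] [[Hsum Hzero Hpos] Hopt] loss xs Hl Hxs.
have us : forall c, uniq (C c).
  move=> c; have [[Hord _] _] : is_maximal_order S (C c) /\ True.
    by split => //; apply/(Cenum (C c)); exists c.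
  apply: (@pairwise_uniq _ (fun a b => a \in S b) _ _ Hord).
  by move=> x /=; exact: negbTE (Hfg x).
have dec : regret_against (alg1_action C lam loss) loss xs =
  \sum_(c < N) \sum_(t < T) lam c t * (\sum_(i < K) expert_action C lam loss c t i * loss t i
                          - \sum_(i < K) xs i * loss t i).
  rewrite /regret_against.
  have e1 : forall c : 'I_N, \sum_(t < T) lam c t * (\sum_(i < K) expert_action C lam loss c t i * loss t i
                          - \sum_(i < K) xs i * loss t i) =
     \sum_(t < T) lam c t * (\sum_(i < K) expert_action C lam loss c t i * loss t i)
     - \sum_(t < T) lam c t * (\sum_(i < K) xs i * loss t i).
    by move=> c; rewrite -sumrB; apply: eq_bigr => t _; exact: mulrBr.
  rewrite (eq_bigr _ (fun c _ => e1 c)) sumrB; congr (_ - _).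
    rewrite [in RHS]exchange_big /=; apply: eq_bigr => t _.
    rewrite /alg1_action.
    under eq_bigr => i _ do rewrite (big_mkcond (fun c => t \in C c)) /= mulr_suml.
    rewrite exchange_big /=; apply: eq_bigr => c _.
    rewrite big_distrr /=; apply: eq_bigr => i _.
    by case: ifP => tC; rewrite ?mulrA // Hzero ?tC // !mul0r.
  rewrite [in RHS]exchange_big /=; apply: eq_bigr => t _.
  by rewrite -mulr_suml Hsum mul1r.
rewrite dec.
apply: (@le_trans _ _ (\sum_(c < N) 2 * Num.sqrt (ln (K%:R : R)) *
           Num.sqrt (\sum_(t | t \in C c) lam c t ^+ 2))).
  apply: ler_sum => c _; apply: chain_bound => //.
  by move=> t; apply: Hzero.
rewrite -mulr_sumr -/(ub_objective C lam) mulrAC.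
have lnK0 : 0 <= Num.sqrt (ln (K%:R : R)) by apply: sqrtr_ge0.
apply: ler_wpM2r => //; apply: ler_wpM2l => //.
apply: lb_le_inf.
  by exists (ub_objective C lam); exists lam.
by move=> y [lam' Hf <-]; apply: Hopt.
Qed.
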